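(* In $\lambda_{\mathrm{ch}}$: if $\Gamma ; \Delta \vdash \mathcal{C}$ with $\Delta = a_1 : A_1, \ldots, a_k : A_k$, then there exists a configuration $\mathcal{C}' \equiv \mathcal{C}$ such that $\mathcal{C}' = (\nu a_{k+1}) \ldots (\nu a_n)(M_1 \parallel \ldots \parallel M_m \parallel a_1(\vec V_1) \parallel \ldots \parallel a_n(\vec V_n))$ for some computations $M_1,\ldots,M_m$ and value sequences $\vec V_1,\ldots,\vec V_n$.
   Context: The calculus $\lambda_{\mathrm{ch}}$. Types $A,B ::= \mathbf{1} \mid A \to B \mid \mathsf{Chan}(A)$; values $V,W ::= \alpha \mid \lambda x.M \mid ()$ ($\alpha$ a variable or a name); computations $M,N ::= V\,W \mid \mathbf{let}\ x \Leftarrow M\ \mathbf{in}\ N \mid \mathbf{return}\ V \mid \mathbf{fork}\ M \mid \mathbf{give}\ V\ W \mid \mathbf{take}\ V \mid \mathbf{newCh}$, with term typing $\Gamma\vdash M:A$ (simple typing of the functional part; $\mathbf{give}\ V\ W:\mathbf 1$ for $V:A$, $W:\mathsf{Chan}(A)$; $\mathbf{take}\ V:A$ for $V:\mathsf{Chan}(A)$; $\mathbf{fork}\ M:\mathbf 1$ for $M:\mathbf 1$; $\mathbf{newCh}:\mathsf{Chan}(A)$). Configurations $\mathcal{C},\mathcal{D} ::= \mathcal{C} \parallel \mathcal{D} \mid (\nu a)\mathcal{C} \mid a(\vec V) \mid M$, where $a(\vec V)$ is a buffer named $a$ holding a (possibly empty) sequence of values. Configuration typing $\Gamma;\Delta\vdash\mathcal{C}$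 ($\Delta$ a linear environment mapping names to types): (Par) $\Gamma;\Delta_1\vdash\mathcal{C}_1$ and $\Gamma;\Delta_2\vdash\mathcal{C}_2$ give $\Gamma;\Delta_1,\Delta_2\vdash\mathcal{C}_1\parallel\mathcal{C}_2$ (disjoint split); (Chan) $\Gamma,a:\mathsf{Chan}(A);\Delta,a:A\vdash\mathcal{C}$ gives $\Gamma;\Delta\vdash(\nu a)\mathcal{C}$; (Buf) $\Gamma\vdash V_i:A$ for all $i$ gives $\Gamma;a:A\vdash a(\vec V)$; (Term) $\Gamma\vdash M:\mathbf 1$ gives $\Gamma;\cdot\vdash M$. Structural congruence $\equiv$: least congruence closed under configuration contexts $G ::= [\,] \mid G\parallel\mathcal{C}\mid(\nu a)G$, with commutativity and associativity of $\parallel$ and scope extrusion $\mathcal{C}\parallel(\nu a)\mathcal{D}\equiv(\nu a)(\mathcal{C}\parallel\mathcal{D})$ if $a\notin\mathsf{fv}(\mathcal{C})$. *)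

(* Defs.v *)
(* Binding is represented with de Bruijn indices:
   - term variables (bound by lambda and let) are de Bruijn indices into the
     list Gamma_v;
   - names (bound by (nu a) in configurations) are de Bruijn indices; the
     innermost enclosing (nu) binds name 0.
   Hence configurations are identified up to alpha-equivalence, and the
   side condition "a notin fv(C)" of scope extrusion is realised by shifting
   the free names of C. *)
From Stdlib Require Import List Arith.
Import ListNotations.

Inductive ty : Type :=
| TUnit : ty
| TArr : ty -> ty -> ty
| TChan : ty -> ty.

Inductive val : Type :=
| VVar : nat -> val
| VName : nat -> val
| VLam : comp -> val         (* lambda x. M ; binds variable 0 in M *)
| VUnit : val
with comp : Type :=
| CApp : val -> val -> comp
| CLet : comp -> comp -> comp   (* let x <= M in N ; binds variable 0 in N *)
| CReturn : val -> comp
| CFork : comp -> comp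
| CGive : val -> val -> comp
| CTake : val -> comp
| CNewCh : comp.

Inductive config : Type :=
| CPar : config -> config -> config
| CNu : config -> config
| CBuf : nat -> list val -> config
| CTerm : comp -> config.

(* Gamma = (variable part, name part); the name part maps
   names to their (channel) types.  Linear environments Delta map names to
   buffer payload types; they are partial maps nat -> option ty. *)
Definition nenv := nat -> option ty.

Definition ext {T} (x : T) (f : nat -> T) : nat -> T :=
  fun i => match i with 0 => x | S j => f j end.

Definition lempty : nenv := fun _ => None.

Definition lsingle (a : nat) (A : ty) : nenv :=
  fun i => if Nat.eqb i a then Some A else None.

Definition lsplit (D D1 D2 : nenv) : Prop :=
  forall i, (D i = D1 i /\ D2 i = None) \/ (D i = D2 i /\ D1 i = None).

Inductive vtyped : list ty -> nenv -> val -> ty -> Prop :=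
| T_Var : forall G N x A, nth_error G x = Some A -> vtyped G N (VVar x) A
| T_Name : forall G N a A, N a = Some A -> vtyped G N (VName a) A
| T_Lam : forall G N M A B, ctyped (A :: G) N M B -> vtyped G N (VLam M) (TArr A B)
| T_Unit : forall G N, vtyped G N VUnit TUnit
with ctyped : list ty -> nenv -> comp -> ty -> Prop :=
| T_App : forall G N V W A B,
    vtyped G N V (TArr A B) -> vtyped G N W A -> ctyped G N (CApp V W) B
| T_Let : forall G N M M' A B,
    ctyped G N M A -> ctyped (A :: G) N M' B -> ctyped G N (CLet M M') B
| T_Return : forall G N V A, vtyped G N V A -> ctyped G N (CReturn V) A
| T_Fork : forall G N M, ctyped G N M TUnit -> ctyped G N (CFork M) TUnit
| T_Give : forall G N V W A,
    vtyped G N V A -> vtyped G N W (TChan A) -> ctyped G N (CGive V W) TUnit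
| T_Take : forall G N V A, vtyped G N V (TChan A) -> ctyped G N (CTake V) A
| T_NewCh : forall G N A, ctyped G N CNewCh (TChan A).

Inductive cfg_typed : list ty -> nenv -> nenv -> config -> Prop :=
| TC_Par : forall G N D D1 D2 C1 C2,
    lsplit D D1 D2 -> cfg_typed G N D1 C1 -> cfg_typed G N D2 C2 ->
    cfg_typed G N D (CPar C1 C2)
| TC_Chan : forall G N D A C,
    cfg_typed G (ext (Some (TChan A)) N) (ext (Some A) D) C ->
    cfg_typed G N D (CNu C)
| TC_Buf : forall G N a A Vs,
    (forall V, In V Vs -> vtyped G N V A) ->
    cfg_typed G N (lsingle a A) (CBuf a Vs)
| TC_Term : forall G N M,
    ctyped G N M TUnit -> cfg_typed G N lempty (CTerm M).

Definition shn (k a : nat) : nat := if Nat.ltb a k then a else S a.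

Fixpoint shift_val (k : nat) (V : val) : val :=
  match V with
  | VVar x => VVar x
  | VName a => VName (shn k a)
  | VLam M => VLam (shift_comp k M)
  | VUnit => VUnit
  end
with shift_comp (k : nat) (M : comp) : comp :=
  match M with
  | CApp V W => CApp (shift_val k V) (shift_val k W)
  | CLet M N => CLet (shift_comp k M) (shift_comp k N)
  | CReturn V => CReturn (shift_val k V)
  | CFork M => CFork (shift_comp k M)
  | CGive V W => CGive (shift_val k V) (shift_val k W)
  | CTake V => CTake (shift_val k V)
  | CNewCh => CNewCh
  end.

Fixpoint shift_cfg (k : nat) (C : config) : config :=
  match C with
  | CPar C1 C2 => CPar (shift_cfg k C1) (shift_cfg k C2)
  | CNu C => CNu (shift_cfg (S k) C)
  | CBuf a Vs => CBuf (shn k a) (map (shift_val k) Vs)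
  | CTerm M => CTerm (shift_comp k M)
  end.

(* Structural congruence: least congruence (w.r.t. contexts G ::= [] | G || C
   | (nu a) G) containing commutativity, associativity of || and scope
   extrusion  C || (nu a) D == (nu a)(C || D)  (a not free in C), the latter
   rendered with de Bruijn shifting. *)
Inductive scong : config -> config -> Prop :=
| SC_Refl : forall C, scong C C
| SC_Sym : forall C D, scong C D -> scong D C
| SC_Trans : forall C D E, scong C D -> scong D E -> scong C E
| SC_CtxPar : forall C D E, scong C D -> scong (CPar C E) (CPar D E)
| SC_CtxNu : forall C D, scong C D -> scong (CNu C) (CNu D)
| SC_Comm : forall C D, scong (CPar C D) (CPar D C)
| SC_Assoc : forall C D E, scong (CPar C (CPar D E)) (CPar (CPar C D) E)
| SC_Extr : forall C D, scong (CPar C (CNu D)) (CNu (CPar (shift_cfg 0 C) D)).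

Fixpoint nus (n : nat) (C : config) : config :=
  match n with 0 => C | S n' => CNu (nus n' C) end.

Fixpoint pars (c : config) (l : list config) : config :=
  match l with
  | [] => c
  | d :: l' => CPar c (pars d l')
  end.

(* Main.v *)
Require Import Defs.
From Stdlib Require Import List Permutation Arith Lia FinFun.
Import ListNotations.

Lemma sc_parR : forall c X Y, scong X Y -> scong (CPar c X) (CPar c Y).
Proof.
  intros. eapply SC_Trans. apply SC_Comm. eapply SC_Trans.
  apply SC_CtxPar; eassumption. apply SC_Comm.
Qed.

Lemma sc_swap : forall a b l, scong (pars a (b :: l)) (pars b (a :: l)).
Proof.
  intros a b [|d m]; simpl. apply SC_Comm.
  eapply SC_Trans. apply SC_Assoc. eapply SC_Trans.
  apply SC_CtxPar, SC_Comm. apply SC_Sym, SC_Assoc.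
Qed.

Lemma sc_perm : forall c l c' l', Permutation (c :: l) (c' :: l') ->
  scong (pars c l) (pars c' l').
Proof.
  intros c l c' l' HP.
  set (Q := fun L L' : list config => match L, L' with
    | c :: l, c' :: l' => scong (pars c l) (pars c' l') | _, _ => True end).
  enough (H : forall L L', Permutation L L' -> Q L L') by exact (H _ _ HP).
  clear. intros L L' HP.
  induction HP; simpl; auto.
  - destruct l as [|d m], l' as [|d' m'].
    + apply SC_Refl.
    + apply Permutation_length in HP; discriminate.
    + apply Permutation_length in HP; discriminate.
    + apply sc_parR; exact IHHP.
  - apply sc_swap.
  - destruct l as [|a l]; [exact I|].
    destruct l' as [|a' l']; [apply Permutation_length in HP1; discriminate|].
    destruct l'' as [|a'' l'']; [apply Permutation_length in HP2; discriminate|].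
    simpl in *. eapply SC_Trans; eauto.
Qed.

Lemma sc_app : forall l c d m,
  scong (CPar (pars c l) (pars d m)) (pars c (l ++ d :: m)).
Proof.
  induction l as [|e l IH]; intros c d m; simpl. apply SC_Refl.
  eapply SC_Trans. apply SC_Sym, SC_Assoc. apply sc_parR. apply IH.
Qed.

Lemma sc_nus : forall n X Y, scong X Y -> scong (nus n X) (nus n Y).
Proof. induction n; simpl; intros; auto. apply SC_CtxNu; auto. Qed.

Lemma nus_add : forall a b X, nus (a + b) X = nus a (nus b X).
Proof. induction a; simpl; intros; auto. rewrite IHa; auto. Qed.

Fixpoint itr {A} (m : nat) (f : A -> A) (x : A) : A :=
  match m with 0 => x | S j => itr j f (f x) end.

Lemma sc_extr : forall n C D,
  scong (CPar C (nus n D)) (nus n (CPar (itr n (shift_cfg 0) C) D)).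
Proof.
  induction n; intros; simpl. apply SC_Refl.
  eapply SC_Trans. apply SC_Extr. apply SC_CtxNu. apply IHn.
Qed.

Lemma sc_extrL : forall n C D,
  scong (CPar (nus n D) C) (nus n (CPar D (itr n (shift_cfg 0) C))).
Proof.
  intros. eapply SC_Trans. apply SC_Comm. eapply SC_Trans. apply sc_extr.
  apply sc_nus, SC_Comm.
Qed.

Lemma shift_nus : forall n k P, shift_cfg k (nus n P) = nus n (shift_cfg (n + k) P).
Proof.
  induction n; intros; simpl; auto. rewrite IHn. f_equal. f_equal. f_equal. lia.
Qed.

Lemma itr_nus : forall m n k P,
  itr m (shift_cfg k) (nus n P) = nus n (itr m (shift_cfg (n + k)) P).
Proof. induction m; intros; simpl; auto. rewrite shift_nus, IHm; auto. Qed.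

Lemma itr_term : forall m k M, itr m (shift_cfg k) (CTerm M) = CTerm (itr m (shift_comp k) M).
Proof. induction m; intros; simpl; auto. Qed.

Lemma itr_buf : forall m k a V, itr m (shift_cfg k) (CBuf a V) =
  CBuf (itr m (shn k) a) (itr m (map (shift_val k)) V).
Proof. induction m; intros; simpl; auto. Qed.

Lemma itr_par : forall m k X Y, itr m (shift_cfg k) (CPar X Y) =
  CPar (itr m (shift_cfg k) X) (itr m (shift_cfg k) Y).
Proof. induction m; intros; simpl; auto. Qed.

Lemma itr_pars : forall m k c l, itr m (shift_cfg k) (pars c l) =
  pars (itr m (shift_cfg k) c) (map (itr m (shift_cfg k)) l).
Proof.
  intros m k c l; revert c; induction l; intros; simpl; auto.
  rewrite itr_par, IHl; auto.
Qed.

Lemma itr_shn : forall m k a, itr m (shn k) a = if a <? k then a else a + m.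
Proof.
  induction m; intros; simpl.
  - destruct (a <? k); lia.
  - rewrite IHm. unfold shn. destruct (a <? k) eqn:E; rewrite ?E; auto.
    destruct (S a <? k) eqn:E2; apply Nat.ltb_ge in E.
    apply Nat.ltb_lt in E2; lia. lia.
Qed.

Definition mkbuf (p : nat * list val) : config := CBuf (fst p) (snd p).

Definition Inv (D : nenv) (C : config) : Prop :=
  exists n Ms B c l,
    Permutation (c :: l) (map CTerm Ms ++ map mkbuf B) /\
    NoDup (map fst B) /\
    (forall x, In x (map fst B) <-> x < n \/ (n <= x /\ D (x - n) <> None)) /\
    scong (nus n (pars c l)) C.

Lemma inv_typed : forall G N D C, cfg_typed G N D C -> Inv D C.
Proof.
  induction 1.
  -
    destruct IHcfg_typed1 as (n1 & Ms1 & B1 & c1 & l1 & P1 & ND1 & IN1 & S1).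
    destruct IHcfg_typed2 as (n2 & Ms2 & B2 & c2 & l2 & P2 & ND2 & IN2 & S2).
    set (f1 := itr n2 (shift_cfg n1)). set (f2 := itr n1 (shift_cfg 0)).
    set (g1 := fun p : nat * list val => (itr n2 (shn n1) (fst p), itr n2 (map (shift_val n1)) (snd p))).
    set (g2 := fun p : nat * list val => (itr n1 (shn 0) (fst p), itr n1 (map (shift_val 0)) (snd p))).
    exists (n2 + n1), (map (itr n2 (shift_comp n1)) Ms1 ++ map (itr n1 (shift_comp 0)) Ms2),
      (map g1 B1 ++ map g2 B2), (f1 c1), (map f1 l1 ++ f2 c2 :: map f2 l2).
    assert (F1 : map fst (map g1 B1) = map (itr n2 (shn n1)) (map fst B1))
      by (rewrite !map_map; reflexivity).
    assert (F2 : map fst (map g2 B2) = map (itr n1 (shn 0)) (map fst B2))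
      by (rewrite !map_map; reflexivity).
    split; [|split; [|split]].
    + assert (HP1 := Permutation_map f1 P1). assert (HP2 := Permutation_map f2 P2).
      change (Permutation ((f1 c1 :: map f1 l1) ++ (f2 c2 :: map f2 l2))
         (map CTerm (map (itr n2 (shift_comp n1)) Ms1 ++ map (itr n1 (shift_comp 0)) Ms2) ++
          map mkbuf (map g1 B1 ++ map g2 B2))).
      replace (f1 c1 :: map f1 l1) with (map f1 (c1 :: l1)) by reflexivity.
      replace (f2 c2 :: map f2 l2) with (map f2 (c2 :: l2)) by reflexivity.
      rewrite map_app in HP1, HP2.
      assert (E1 : map f1 (map CTerm Ms1) = map CTerm (map (itr n2 (shift_comp n1)) Ms1)).
      { rewrite !map_map. apply map_ext. intros; apply itr_term. }
      assert (E2 : map f2 (map CTerm Ms2) = map CTerm (map (itr n1 (shift_comp 0)) Ms2)).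
      { rewrite !map_map. apply map_ext. intros; apply itr_term. }
      assert (E3 : map f1 (map mkbuf B1) = map mkbuf (map g1 B1)).
      { rewrite !map_map. apply map_ext. intros; apply itr_buf. }
      assert (E4 : map f2 (map mkbuf B2) = map mkbuf (map g2 B2)).
      { rewrite !map_map. apply map_ext. intros; apply itr_buf. }
      rewrite E1, E3 in HP1. rewrite E2, E4 in HP2.
      eapply Permutation_trans. apply Permutation_app; eassumption.
      rewrite !map_app. rewrite <- !app_assoc. apply Permutation_app_head.
      rewrite !app_assoc. apply Permutation_app_tail. apply Permutation_app_comm.
    + rewrite map_app, F1, F2. apply NoDup_app.
      * apply Injective_map_NoDup_in; auto. intros x y _ _. rewrite !itr_shn.
        destruct (Nat.ltb_spec x n1), (Nat.ltb_spec y n1); lia.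
      * apply Injective_map_NoDup_in; auto. intros x y _ _. rewrite !itr_shn.
        destruct (Nat.ltb_spec x 0), (Nat.ltb_spec y 0); lia.
      * intros y Hy1 Hy2. apply in_map_iff in Hy1 as (p1 & Ey1 & Hp1).
        apply in_map_iff in Hy2 as (p2 & Ey2 & Hp2).
        rewrite itr_shn in Ey1, Ey2.
        assert (I1 := proj1 (IN1 p1) Hp1).
        assert (I2 := proj1 (IN2 p2) Hp2).
        destruct (Nat.ltb_spec p2 0); [lia|].
        destruct (Nat.ltb_spec p1 n1); [lia|].
        destruct I1 as [I1|[_ I1]]; [lia|]. destruct I2 as [I2|[I2' I2]]; [lia|].
        replace (p2 - n2) with (p1 - n1) in I2 by lia.
        destruct (H (p1 - n1)) as [[_ K]|[_ K]]; congruence.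
    + intros x. rewrite map_app, F1, F2, in_app_iff. split.
      * intros [Hx|Hx]; apply in_map_iff in Hx as (p & Ex & Hp);
          rewrite itr_shn in Ex.
        -- assert (I1 := proj1 (IN1 p) Hp).
           destruct (Nat.ltb_spec p n1); [left; lia|].
           destruct I1 as [I1|[I1' I1]]; [lia|].
           right. split; [lia|]. replace (x - (n2 + n1)) with (p - n1) by lia.
           destruct (H (p - n1)) as [[K _]|[_ K]]; congruence.
        -- assert (I2 := proj1 (IN2 p) Hp).
           destruct (Nat.ltb_spec p 0); [lia|].
           destruct I2 as [I2|[I2' I2]]; [left; lia|].
           right. split; [lia|]. replace (x - (n2 + n1)) with (p - n2) by lia.
           destruct (H (p - n2)) as [[_ K]|[K _]]; congruence.
      * intros [Hx|[Hx Dx]].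
        -- destruct (Nat.ltb_spec x n1).
           ++ left. apply in_map_iff. exists x. split.
              rewrite itr_shn. destruct (Nat.ltb_spec x n1); lia.
              apply IN1. left; lia.
           ++ right. apply in_map_iff. exists (x - n1). split.
              rewrite itr_shn. destruct (Nat.ltb_spec (x - n1) 0); lia.
              apply IN2. left; lia.
        -- destruct (H (x - (n2 + n1))) as [[K K2]|[K K2]].
           ++ left. rewrite K in Dx. apply in_map_iff. exists (x - n2). split.
              rewrite itr_shn. destruct (Nat.ltb_spec (x - n2) n1); lia.
              apply IN1. right. split; [lia|].
              replace (x - n2 - n1) with (x - (n2 + n1)) by lia; exact Dx.
           ++ right. rewrite K in Dx. apply in_map_iff. exists (x - n1). split.
              rewrite itr_shn. destruct (Nat.ltb_spec (x - n1) 0); lia.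
              apply IN2. right. split; [lia|].
              replace (x - n1 - n2) with (x - (n2 + n1)) by lia; exact Dx.
    + rewrite nus_add. eapply SC_Trans.
      2:{ apply SC_Trans with (CPar (nus n1 (pars c1 l1)) C2).
          apply sc_parR. exact S2. apply SC_CtxPar. exact S1. }
      eapply SC_Sym, SC_Trans. apply sc_extr.
      apply sc_nus. rewrite itr_nus, Nat.add_0_r. eapply SC_Trans. apply sc_extrL.
      apply sc_nus. unfold f1, f2. rewrite (itr_pars n2 n1), (itr_pars n1 0). apply sc_app.
  -
    destruct IHcfg_typed as (n & Ms & B & c & l & P & ND & IN & Sc).
    exists (S n), Ms, B, c, l. split; [|split; [|split]]; auto.
    + intros x. rewrite IN. unfold ext. split.
      * intros [Hx|[Hx Dx]]; [left; lia|].
        destruct (x - n) eqn:E; [left; lia|]. right. split; [lia|].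
        replace (x - S n) with n0 by lia. auto.
      * intros [Hx|[Hx Dx]].
        -- destruct (Nat.eq_dec x n). right. split; [lia|]. subst. rewrite Nat.sub_diag. discriminate.
           left; lia.
        -- right. split; [lia|]. replace (x - n) with (S (x - S n)) by lia. auto.
    + simpl. apply SC_CtxNu; auto.
  -
    exists 0, [], [(a, Vs)], (CBuf a Vs), []. split; [|split; [|split]]; simpl.
    + apply Permutation_refl.
    + constructor; auto. constructor.
    + intros x. unfold lsingle. rewrite Nat.sub_0_r. split.
      * intros [<-|[]]. right. split; [lia|]. rewrite Nat.eqb_refl; discriminate.
      * intros [Hx|[_ Hx]]; [lia|]. destruct (Nat.eqb x a) eqn:E; [|congruence].
        apply Nat.eqb_eq in E; auto.
    + apply SC_Refl.
  -
    exists 0, [M], [], (CTerm M), []. split; [|split; [|split]]; simpl.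
    + apply Permutation_refl.
    + constructor.
    + intros x. unfold lempty. split; [intros []|]. intros [H1|[_ H1]]; [lia|congruence].
    + apply SC_Refl.
Qed.

Lemma perm_combine : forall (X : list nat) (B : list (nat * list val)),
  Permutation (map fst B) X -> exists Vs, length Vs = length X /\ Permutation B (combine X Vs).
Proof.
  induction X as [|a X IH]; intros B HP.
  - apply Permutation_sym, Permutation_nil in HP. destruct B; [|discriminate].
    exists []. split; auto.
  - assert (Ha : In a (map fst B)) by (eapply Permutation_in; [apply Permutation_sym, HP|left; auto]).
    apply in_map_iff in Ha as ([a' v] & Ea & Hp). simpl in Ea; subst a'.
    apply in_split in Hp as (B1 & B2 & ->).
    rewrite map_app in HP. simpl in HP.
    apply Permutation_sym, Permutation_cons_app_inv, Permutation_sym in HP.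
    rewrite <- map_app in HP. destruct (IH _ HP) as (Vs & L & P).
    exists (v :: Vs). split; simpl; auto.
    eapply Permutation_trans. apply Permutation_sym, Permutation_middle.
    apply perm_skip. exact P.
Qed.

Lemma combine_app' : forall {A B} (l1 l2 : list A) (v1 v2 : list B),
  length l1 = length v1 -> combine (l1 ++ l2) (v1 ++ v2) = combine l1 v1 ++ combine l2 v2.
Proof.
  induction l1; intros; destruct v1; simpl in *; try discriminate; auto.
  f_equal. apply IHl1. lia.
Qed.

Lemma map_shift_combine : forall n (as_ : list nat) (V : list (list val)),
  map (fun p => CBuf (fst p + n) (snd p)) (combine as_ V) =
  map mkbuf (combine (map (fun a => a + n) as_) V).
Proof. induction as_; intros; destruct V; simpl; auto. f_equal. auto. Qed.

Theorem lemma6 :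
  forall (G : list ty) (N D : nenv) (C : config) (as_ : list nat),
    cfg_typed G N D C ->
    NoDup as_ ->
    (forall a, In a as_ <-> D a <> None) ->
    exists (n' : nat) (Ms : list comp) (Vfree : list (list val))
           (Vbound : list (list val)) (c : config) (l : list config),
      length Vfree = length as_ /\
      length Vbound = n' /\
      c :: l = map CTerm Ms
               ++ map (fun p => CBuf (fst p + n') (snd p)) (combine as_ Vfree)
               ++ map (fun p => CBuf (fst p) (snd p)) (combine (rev (seq 0 n')) Vbound) /\
      scong (nus n' (pars c l)) C.
Proof.
  intros G N D C as_ HT ND HD.
  destruct (inv_typed _ _ _ _ HT) as (n & Ms & B & c & l & P & NDB & IN & Sc).
  set (X := map (fun a => a + n) as_ ++ rev (seq 0 n)).
  assert (PX : Permutation (map fst B) X).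
  { apply NoDup_Permutation; auto.
    - unfold X. apply NoDup_app.
      + apply Injective_map_NoDup; auto. intros x y E; lia.
      + apply NoDup_rev, seq_NoDup.
      + intros a H1 H2. apply in_map_iff in H1 as (b & <- & _).
        apply in_rev, in_seq in H2. lia.
    - intros x. rewrite IN. unfold X. rewrite in_app_iff, <- in_rev, in_seq, in_map_iff.
      split.
      + intros [Hx|[Hx Dx]]; [right; lia|]. left. exists (x - n). split; [lia|].
        apply HD; auto.
      + intros [(b & <- & Hb)|Hx]; [|left; lia]. right. split; [lia|].
        replace (b + n - n) with b by lia. apply HD; auto. }
  destruct (perm_combine _ _ PX) as (Vs & LV & PB).
  unfold X in LV, PB. rewrite app_length, map_length in LV.
  exists n, Ms, (firstn (length as_) Vs), (skipn (length as_) Vs).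
  assert (L1 : length (firstn (length as_) Vs) = length as_) by (rewrite firstn_length; lia).
  assert (L2 : length (skipn (length as_) Vs) = n)
    by (rewrite skipn_length, rev_length, seq_length in *; lia).
  rewrite <- (firstn_skipn (length as_) Vs) in PB.
  rewrite combine_app' in PB by (rewrite map_length; auto).
  rewrite map_shift_combine.
  match goal with |- exists c l, _ /\ _ /\ c :: l = ?T /\ _ =>
    assert (PT : Permutation (c :: l) T) end.
  { eapply Permutation_trans. exact P. apply Permutation_app_head.
    rewrite <- map_app. apply Permutation_map. exact PB. }
  match goal with PT : Permutation _ ?T |- _ => destruct T as [|c' l'] eqn:ET end.
  { apply Permutation_length in PT. discriminate. }
  exists c', l'. split; [auto|split; [auto|split; [reflexivity|]]].
  eapply SC_Trans; [|exact Sc]. apply sc_nus, sc_perm, Permutation_sym, PT.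
Qed.
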